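(* Let $\psi(x,y)=\binom{x}{y}$ and let $T$ be the semi-infinite symmetric Pascal matrix $T_{jk}=\binom{j+k}{j}$, $j,k\in\mathbb N$. For $L\in\mathcal F_x(\psi)$, the matrix $\pi(L)$ commutes with $T$ if and only if $L^*\in\mathcal F_x(\psi)$ and $b_\psi(L^* )=b_\psi(L)^*$.
   Context: $\mathbb N=\{0,1,2,\dots\}$; matrix indices start at $0$. Shifts: $(\delta_x f)(x)=f(x+1)$, $(\delta_x^* f)(x)=f(x-1)$ with $f$ extended by $0$ to negative arguments. Difference operators are finite expressions $L=\sum_{k=0}^n a_k(x)\delta_x^k+\sum_{k=1}^n a_{-k}(x)(\delta_x^k)^*$ with $a_k:\mathbb N\to\mathbb R$; $\pi(L)$ is the semi-infinite matrix with $\pi(L)_{x,x+k}=a_k(x)$ (zero elsewhere), so that $\pi(L)$ acting on sequences corresponds to $L$ acting on functions. The anti-involution $*$ on difference operators swaps $\delta$ and $\delta^*$, fixes multiplication operators, and reverses products; it satisfies $\pi(L^* )=\pi(L)^\intercal$. Fourier algebras: $\mathcal F_x(\psi)=\{L(x,\delta_x): L\cdot\psi=R\cdot\psi\text{ for some difference operator }R(y,\delta_y)\}$ (operators in $x$ acting for fixed $y$, in $y$ for fixed $x$), and $b_\psi(L)$ is the unique such $R$. *)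

(* Defs.v *)
From HB Require Import structures.
From mathcomp Require Import all_boot all_order all_algebra.
From Stdlib Require Import ClassicalEpsilon.
Set Implicit Arguments. Unset Strict Implicit. Unset Printing Implicit Defensive.
Import Order.TTheory GRing.Theory Num.Theory.
Local Open Scope ring_scope.

(* A difference operator on functions N -> R:
   L = sum_{k=0}^n a_k(x) delta^k + sum_{k=1}^n a_{-k}(x) (delta^k)^*,
   represented by its order bound n and its coefficients a : int -> nat -> R
   (only the offsets -n..n are used). *)
Record diffop (R : Type) := DiffOp { dord : nat; dcoef : int -> nat -> R }.

Section DiffOps.
Variable R : realFieldType.

(* action of L on a function f : N -> R (f extended by 0 to negative args) *)
Definition dact (L : diffop R) (f : nat -> R) (x : nat) : R :=
  \sum_(k < (dord L).+1) dcoef L (k%:Z) x * f (x + k)%N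
  + \sum_(1 <= k < (dord L).+1)
       dcoef L (- (k%:Z)) x * (if (k <= x)%N then f (x - k)%N else 0).

(* the semi-infinite matrix pi(L): pi(L)_{i, i+k} = a_k(i) *)
Definition dmat (L : diffop R) (i j : nat) : R :=
  if ((j <= i + dord L) && (i <= j + dord L))%N
  then dcoef L (j%:Z - i%:Z) i else 0.

Definition opeq (L1 L2 : diffop R) : Prop :=
  forall i j : nat, dmat L1 i j = dmat L2 i j.

(* the anti-involution *: (a(x) delta^k)^* = a(x-k) (delta^k)^*,
   (a(x) (delta^k)^* )^* = a(x+k) delta^k; so the coefficient of offset k
   at x in L^* is a_{-k}(x+k). *)
Definition dstar (L : diffop R) : diffop R :=
  DiffOp (dord L)
    (fun k x => if (0 <= x%:Z + k) then dcoef L (- k) (absz (x%:Z + k)) else 0).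

Definition psi (x y : nat) : R := ('C(x, y))%:R.

Definition in_Fx (L : diffop R) : Prop :=
  exists Rop : diffop R, forall x y : nat,
    dact L (fun x' => psi x' y) x = dact Rop (fun y' => psi x y') y.

Definition zero_op : diffop R := DiffOp 0 (fun _ _ => 0).

(* b_psi(L): the (unique up to opeq) R with L.psi = R.psi *)
Definition b_psi (L : diffop R) : diffop R :=
  match excluded_middle_informative (in_Fx L) with
  | left H => proj1_sig (constructive_indefinite_description _ H)
  | right _ => zero_op
  end.

Definition pascal (j k : nat) : R := ('C(j + k, j))%:R.

(* pi(L) T = T pi(L); the sums are finite since pi(L) is banded
   (pi(L)_{i,j} = 0 unless |i-j| <= dord L). *)
Definition commutes_with_pascal (L : diffop R) : Prop :=
  forall i k : nat,
    \sum_(j < (i + dord L).+1) dmat L i j * pascal j k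
    = \sum_(j < (k + dord L).+1) pascal i j * dmat L j k.

End DiffOps.

(* Main.v *)
Require Import Defs.
From HB Require Import structures.
From mathcomp Require Import all_boot all_order all_algebra.
From mathcomp Require Import zify ring lra.
From Stdlib Require Import ClassicalEpsilon.
Set Implicit Arguments. Unset Strict Implicit. Unset Printing Implicit Defensive.
Import Order.TTheory GRing.Theory Num.Theory.
Local Open Scope ring_scope.

Section Aux.
Variable R : realFieldType.
Implicit Types f g : nat -> R.

Notation C := (fun a b : nat => ('C(a, b))%:R : R).

Lemma sum_trunc f K N : (forall j, (K <= j)%N -> f j = 0) -> (K <= N)%N ->
  \sum_(j < N) f j = \sum_(j < K) f j.
Proof.
move=> H hKN; rewrite -!(big_mkord xpredT) (big_cat_nat (n:=K)) //=.
rewrite [X in _ + X]big1_seq ?addr0 // => j /andP[_].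
by rewrite mem_index_iota => /andP[h _]; apply: H.
Qed.

Lemma sum_bound f b1 b2 : (forall j, (minn b1 b2 <= j)%N -> f j = 0) ->
  \sum_(j < b1) f j = \sum_(j < b2) f j.
Proof.
move=> H; rewrite (sum_trunc H (geq_minl _ _)) (sum_trunc H (geq_minr _ _)) //.
Qed.

Lemma sum_pick f N j : (j < N)%N -> (forall i, i != j -> f i = 0) ->
  \sum_(i < N) f i = f j.
Proof.
move=> hj H; rewrite (bigD1 (Ordinal hj)) //= big1 ?addr0 // => i hi.
apply: H; apply: contra hi => /eqP e; apply/eqP; exact: val_inj.
Qed.

Lemma C0 a b : (a < b)%N -> C a b = 0.
Proof. by move=> h; rewrite /= bin_small. Qed.

Lemma pascalE j k : pascal R j k = \sum_(l < j.+1) C j l * C k l.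
Proof.
rewrite /pascal -binomial.Vandermonde natr_sum (reindex_inj rev_ord_inj) /=.
apply: eq_bigr => l _; rewrite natrM.
have hl : (l <= j)%N by rewrite -ltnS.
by rewrite subSS subKn // bin_sub.
Qed.


Lemma dmat_band (L : diffop R) i j :
  ((i + dord L < j)%N || (j + dord L < i)%N) -> dmat L i j = 0.
Proof.
rewrite /dmat; case: ifP => // /andP[h1 h2] /orP[h|h]; lia.
Qed.

Lemma dmat_dstar (L : diffop R) i j : dmat (dstar L) i j = dmat L j i.
Proof.
rewrite /dmat /= andbC; case: ifP => // _.
have -> : (i%:Z + (j%:Z - i%:Z)) = j%:Z by lia.
by rewrite (_ : (0 <= Posz j) = true) // opprB.
Qed.

Lemma sum_ext_nat (F : nat -> R) a b c : (b <= c)%N ->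
  \sum_(a <= k < b) F k = \sum_(a <= k < c) (if (k < b)%N then F k else 0).
Proof.
move=> hbc; case: (leqP a b) => hab.
  rewrite [RHS](big_cat_nat (n:=b)) //= [X in _ + X]big1_seq ?addr0; last first.
    move=> k /andP[_]; rewrite mem_index_iota => /andP[h _].
    by rewrite ltnNge h.
  by apply: eq_big_nat => k /andP[_ ->].
rewrite big_geq ?(ltnW hab) // big1_seq // => k /andP[_].
rewrite mem_index_iota => /andP[h _]; case: ifP => // h'; lia.
Qed.

Lemma sum_shift (F : nat -> R) x m :
  \sum_(x <= i < x + m) F i = \sum_(k < m) F (x + k)%N.
Proof.
elim: m => [|m IH]; first by rewrite addn0 big_geq // big_ord0.
by rewrite addnS big_nat_recr ?leq_addr //= IH big_ord_recr.
Qed.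

Lemma dactE (L : diffop R) f x :
  dact L f x = \sum_(j < (x + dord L).+1) dmat L x j * f j.
Proof.
move: (leqnn (dord L)); set n := {2}(dord L) => hn.
rewrite /dact -(big_mkord xpredT (fun j => dmat L x j * f j)).
rewrite [RHS](big_cat_nat (n:=x)) //=; last by lia.
rewrite addrC; congr (_ + _).
  rewrite -addnS sum_shift.
  apply: eq_bigr => k _; rewrite /dmat.
  have hk : (k < n.+1)%N := ltn_ord k.
  rewrite ifT; last by apply/andP; split; lia.
  by congr (dcoef L _ x * _); lia.
rewrite [RHS]big_nat_rev big_add1 /=.
rewrite [LHS](sum_ext_nat _ _ (c := (x + n).+1)); last by lia.
rewrite [RHS](sum_ext_nat _ _ (c := (x + n).+1)); last by lia.
apply: eq_big_nat => k /andP[hk1 hk2].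
have -> : (0 + x - k.+1)%N = (x - k.+1)%N by lia.
case: (leqP k.+1 x) => hkx; case: (leqP k.+1 (dord L)) => hkn.
- rewrite /dmat ifT; last by apply/andP; split; lia.
  by congr (dcoef L _ x * _); lia.
- by rewrite dmat_band ?mul0r //; apply/orP; right; lia.
- by rewrite mulr0.
- by [].
Qed.


Lemma sum_bound2 f b1 b2 :
  (forall j, ((b1 <= j)%N || (b2 <= j)%N) -> f j = 0) ->
  \sum_(j < b1) f j = \sum_(j < b2) f j.
Proof. move=> H; apply: sum_bound => j hj; apply: H; lia. Qed.

Lemma uniq0 f N : (forall j, (N <= j)%N -> f j = 0) ->
  (forall x, \sum_(j < N) f j * C x j = 0) -> forall j, f j = 0.
Proof.
move=> H0 H j; elim/ltn_ind: j => j IH.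
case: (leqP N j) => hj; first exact: H0.
have := H j; rewrite (@sum_pick (fun i => f i * C j i) N j hj) /= ?binn ?mulr1 //.
move=> i hi.
case: (ltngtP i j) => h; first by rewrite IH ?mul0r.
  by rewrite C0 ?mulr0.
by move/eqP: hi; rewrite h.
Qed.

Definition band (A : nat -> nat -> R) n :=
  forall i j, ((i + n < j)%N || (j + n < i)%N) -> A i j = 0.
Definition FX (A : nat -> nat -> R) n (B : nat -> nat -> R) m :=
  forall x y, \sum_(j < (x + n).+1) A x j * C j y
            = \sum_(j < (y + m).+1) B y j * C x j.
Definition FXs (A : nat -> nat -> R) n (B : nat -> nat -> R) m :=
  forall x y, \sum_(j < (x + n).+1) A j x * C j y
            = \sum_(j < (y + m).+1) B j y * C x j.
Definition Comm (A : nat -> nat -> R) n :=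
  forall i k, \sum_(j < (i + n).+1) A i j * pascal R j k
            = \sum_(j < (k + n).+1) pascal R i j * A j k.


Lemma pascal_bound j k b : (k < b)%N ->
  pascal R j k = \sum_(l < b) C j l * C k l.
Proof.
move=> hb; rewrite pascalE; apply: (@sum_bound2 (fun l => C j l * C k l)) => l /orP[h|h].
  by rewrite C0 ?mul0r.
by rewrite (C0 (a := k)) ?mulr0 //; lia.
Qed.

Lemma pascal_bound' j k b : (j < b)%N ->
  pascal R j k = \sum_(l < b) C j l * C k l.
Proof.
move=> hb; rewrite pascalE; apply: (@sum_bound2 (fun l => C j l * C k l)) => l /orP[h|h].
  by rewrite C0 ?mul0r.
by rewrite (C0 (a := j)) ?mul0r //; lia.
Qed.

Lemma fwd A n B m : band A n -> band B m -> FX A n B m -> Comm A n ->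
  FXs A n B m.
Proof.
move=> hA hB hF hC x y.
pose N := (x + n + m).+1.
pose D j := \sum_(l < (x+n).+1) B l j * C x l - \sum_(l < (x+n).+1) C l j * A l x.
have hD : forall j, D j = 0.
  apply: (uniq0 (N := N)).
  - move=> j hj; rewrite /D [X in X - _]big1 ?[X in _ - X]big1 ?subrr // => l _.
    + rewrite C0 ?mul0r //; have := ltn_ord l; lia.
    + rewrite hB ?mul0r //; apply/orP; left; have := ltn_ord l; lia.
  - move=> i.
    have E1 : \sum_(j < N) (\sum_(l < (x+n).+1) B l j * C x l) * C i j
              = \sum_(j < (i+n).+1) A i j * pascal R j x.
      under eq_bigr do rewrite big_distrl /=.
      rewrite exchange_big /=.
      transitivity (\sum_(l < (x+n).+1) C x l * \sum_(j < N) B l j * C i j).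
        apply: eq_bigr => l _; rewrite big_distrr; apply: eq_bigr => j _ /=.
        by rewrite mulrAC mulrC.
      transitivity (\sum_(l < (x+n).+1) C x l * \sum_(j < (i+n).+1) A i j * C j l).
        apply: eq_bigr => l _; rewrite hF; congr (_ * _).
        apply: (@sum_bound2 (fun j => B l j * C i j)) => j hj; rewrite hB ?mul0r //; apply/orP; left.
        have := ltn_ord l; lia.
      transitivity (\sum_(l < (x+n).+1) \sum_(j < (i+n).+1) C x l * (A i j * C j l)).
        by apply: eq_bigr => l _; rewrite big_distrr.
      rewrite exchange_big /=; apply: eq_bigr => j _.
      rewrite (pascal_bound j (b := (x+n).+1)) ?big_distrr /=; last by lia.
      by apply: eq_bigr => l _; rewrite mulrCA (mulrC (C x l)).
    have E2 : \sum_(j < N) (\sum_(l < (x+n).+1) C l j * A l x) * C i j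
              = \sum_(j < (x+n).+1) pascal R i j * A j x.
      under eq_bigr do rewrite big_distrl /=.
      rewrite exchange_big /=; apply: eq_bigr => l _.
      rewrite (@pascal_bound i l N); last by have := ltn_ord l; rewrite /N; lia.
      rewrite big_distrl /=; apply: eq_bigr => j _.
      by rewrite mulrC mulrA.
    rewrite /D; under eq_bigr do rewrite mulrBl.
    by rewrite sumrB E1 E2 hC subrr.
have := hD y; rewrite /D => /eqP; rewrite subr_eq0 => /eqP E.
transitivity (\sum_(l < (x+n).+1) C l y * A l x).
  by apply: eq_bigr => j _; rewrite mulrC.
rewrite -E; apply: (@sum_bound2 (fun j => B j y * C x j)) => j /orP[h|h].
  by rewrite C0 ?mulr0 //; lia.
by rewrite hB ?mul0r //; apply/orP; right; lia.
Qed.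


Lemma bwd A n B m : band A n -> band B m -> FX A n B m -> FXs A n B m ->
  Comm A n.
Proof.
move=> hA hB hF hFs i k.
pose N := (i + k + n + m).+1.
transitivity (\sum_(l < N) C k l * \sum_(j < (i+n).+1) A i j * C j l).
  transitivity (\sum_(j < (i+n).+1) \sum_(l < N) C k l * (A i j * C j l)).
    apply: eq_bigr => j _; rewrite (@pascal_bound j k N); last by rewrite /N; lia.
    by rewrite big_distrr; apply: eq_bigr => l _ /=; ring.
  by rewrite exchange_big; apply: eq_bigr => l _; rewrite big_distrr.
transitivity (\sum_(l < N) C k l * \sum_(j < N) B l j * C i j).
  apply: eq_bigr => l _; rewrite hF; congr (_ * _).
  apply: (@sum_bound2 (fun j => B l j * C i j)) => j /orP[h|h].
    by rewrite hB ?mul0r //; apply/orP; left; lia.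
  by rewrite C0 ?mulr0 //; move: h; rewrite /N; lia.
transitivity (\sum_(j < N) C i j * \sum_(l < N) C k l * B l j).
  transitivity (\sum_(l < N) \sum_(j < N) C i j * (C k l * B l j)).
    by apply: eq_bigr => l _; rewrite big_distrr; apply: eq_bigr => j _ /=; ring.
  by rewrite exchange_big; apply: eq_bigr => j _; rewrite big_distrr.
transitivity (\sum_(j < N) C i j * \sum_(l < (k+n).+1) A l k * C l j).
  apply: eq_bigr => j _; rewrite hFs; congr (_ * _).
  transitivity (\sum_(l < N) B l j * C k l).
    by apply: eq_bigr => l _; rewrite mulrC.
  apply: (@sum_bound2 (fun l => B l j * C k l)) => l /orP[h|h].
    by rewrite C0 ?mulr0 //; move: h; rewrite /N; lia.
  by rewrite hB ?mul0r //; apply/orP; right; lia.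
transitivity (\sum_(j < N) \sum_(l < (k+n).+1) C i j * (A l k * C l j)).
  by apply: eq_bigr => j _; rewrite big_distrr.
rewrite exchange_big; apply: eq_bigr => l _ /=.
rewrite (@pascal_bound i l N); last by have := ltn_ord l; rewrite /N; lia.
by rewrite big_distrl; apply: eq_bigr => j _ /=; ring.
Qed.


Lemma b_psi_spec (L : diffop R) : in_Fx L ->
  forall x y, dact L (fun x' => psi R x' y) x = dact (b_psi L) (fun y' => psi R x y') y.
Proof.
rewrite /b_psi => H; case: excluded_middle_informative => // H'.
exact: (proj2_sig (constructive_indefinite_description _ H')).
Qed.

Lemma FX_of (L Q : diffop R) :
  (forall x y, dact L (fun x' => psi R x' y) x = dact Q (fun y' => psi R x y') y) ->
  FX (dmat L) (dord L) (dmat Q) (dord Q).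
Proof. by move=> H x y; have := H x y; rewrite !dactE. Qed.

Lemma band_dmat (L : diffop R) : band (dmat L) (dord L).
Proof. by move=> i j h; apply: dmat_band. Qed.

End Aux.

Theorem mainTheorem4 (R : realFieldType) (L : diffop R) :
  in_Fx L ->
  (commutes_with_pascal L <->
   (in_Fx (dstar L) /\ opeq (b_psi (dstar L)) (dstar (b_psi L)))).
Proof.
move=> hL; have hF := FX_of (b_psi_spec hL).
set Q := b_psi L in hF *.
have hA := @band_dmat _ L; have hB := @band_dmat _ Q.
split.
- move=> hC; have hFs := fwd hA hB hF hC.
  have hS : in_Fx (dstar L).
    exists (dstar Q) => x y; rewrite !dactE /=.
    under eq_bigr do rewrite dmat_dstar.
    under [RHS]eq_bigr do rewrite dmat_dstar.
    exact: hFs.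
  split => //.
  have hF' := FX_of (b_psi_spec hS).
  set Q' := b_psi (dstar L) in hF' *.
  have hB' := @band_dmat _ Q'.
  move=> y j; rewrite dmat_dstar.
  pose f j := dmat Q' y j - dmat Q j y.
  suff : f j = 0 by move/eqP; rewrite subr_eq0 => /eqP.
  apply: (uniq0 (N := (y + dord Q + dord Q').+1)).
    move=> k hk; rewrite /f hB' ?hB ?subrr //; apply/orP; [right|left]; lia.
  move=> x; under eq_bigr do rewrite mulrBl; rewrite sumrB.
  apply/eqP; rewrite subr_eq0; apply/eqP.
  have E1 := hF' x y; have E2 := hFs x y.
  simpl in E1.
  transitivity (\sum_(k < (y + dord Q').+1) dmat Q' y k * ('C(x, k))%:R).
    apply: (@sum_bound2 _ (fun k => dmat Q' y k * ('C(x, k))%:R)) => k hk.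
    by rewrite hB' ?mul0r //; apply/orP; left; lia.
  rewrite -E1.
  transitivity (\sum_(k < (y + dord Q).+1) dmat Q k y * ('C(x, k))%:R); last first.
    apply: (@sum_bound2 _ (fun k => dmat Q k y * ('C(x, k))%:R)) => k hk.
    by rewrite hB ?mul0r //; apply/orP; right; lia.
  rewrite -E2; apply: eq_bigr => k _; by rewrite dmat_dstar.
- move=> [hS hop].
  have hF' := FX_of (b_psi_spec hS).
  set Q' := b_psi (dstar L) in hF' hop *.
  have hB' := @band_dmat _ Q'.
  apply: (bwd hA hB hF) => x y.
  have E1 := hF' x y; simpl in E1.
  transitivity (\sum_(j < (x + dord L).+1) dmat (dstar L) x j * ('C(j, y))%:R).
    by apply: eq_bigr => j _; rewrite dmat_dstar.
  rewrite E1.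
  transitivity (\sum_(j < (y + dord Q').+1) dmat Q j y * ('C(x, j))%:R).
    by apply: eq_bigr => j _; rewrite hop dmat_dstar.
  apply: (@sum_bound2 _ (fun k => dmat Q k y * ('C(x, k))%:R)) => k /orP[hk|hk].
    by rewrite -(dmat_dstar Q) -hop hB' ?mul0r //; apply/orP; left; lia.
  by rewrite hB ?mul0r //; apply/orP; right; lia.
Qed.
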